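(* Let $\mathcal{M}=(\mathcal{S},\mathcal{A},\mathcal{P},r,p_0)$ be an infinite-horizon MDP as in the context, $D\in\mathbb{N}$, $\gamma_0,\dots,\gamma_D\in(0,1)$, and $\pi$ a stationary policy. For $d\le D$ let $V_d^\pi(s):=\mathbb{E}_\pi\big[\sum_{t=0}^\infty\Phi_d(t)r(s_t,a_t)\mid s_0=s\big]$. Then for every state $s\in\mathcal{S}$, $$V_D^\pi(s)=\mathbb{E}_{a\sim\pi(s),\,s'\sim\mathcal{P}(s,a)}\Big[r(s,a)+\sum_{d=0}^D\gamma_d\,V_d^\pi(s')\Big].$$
   Context: $\mathcal{S}\subseteq\mathbb{R}^{k}$, $\mathcal{A}\subseteq\mathbb{R}^{k'}$ finite or compact, $\mathcal{P}:\mathcal{S}\times\mathcal{A}\to\Delta(\mathcal{S})$ a transition kernel, $r:\mathcal{S}\times\mathcal{A}\to\mathbb{R}$ a continuous reward. $\mathbb{E}_\pi$ is the expectation over trajectories with $a_t\sim\pi(s_t)$, $s_{t+1}\sim\mathcal{P}(s_t,a_t)$. For $d\le D$, $$\Phi_d(t):=\sum_{\substack{(a_0,\dots,a_d)\in\mathbb{N}^{d+1}\\ a_0+\dots+a_d=t}}\ \prod_{i=0}^{d}\gamma_i^{a_i}.$$ *)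

(* Defs.v *)
From HB Require Import structures.
From mathcomp Require Import all_boot all_order all_algebra.
From mathcomp Require Import all_classical all_reals all_analysis.
Set Implicit Arguments. Unset Strict Implicit. Unset Printing Implicit Defensive.
Import Order.TTheory GRing.Theory Num.Theory.
Import numFieldNormedType.Exports.
Local Open Scope classical_set_scope.
Local Open Scope ring_scope.

(* Phi_d(t) = sum over (a_0,...,a_d) in N^{d+1} with a_0+...+a_d = t of
   prod_i gam_i^{a_i}.  Every such a_i is <= t, so indexing the a_i by 'I_t.+1
   enumerates exactly the same tuples. *)
Definition Phi (R : realType) (gam : nat -> R) (d t : nat) : R :=
  \sum_(a : {ffun 'I_d.+1 -> 'I_t.+1} | (\sum_(i < d.+1) (a i : nat))%N == t)
     \prod_(i < d.+1) gam i ^+ (a i : nat).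

Section MDP.
Context (R : realType) (dS dA : measure_display)
        (S : measurableType dS) (A : measurableType dA)
        (P : R.-pker (S * A)%type ~> S)
        (pi : R.-pker S ~> A)
        (r : S * A -> R).

Definition step_exp (g : A -> S -> R) (s : S) : R :=
  \int[pi s]_(a in setT) \int[P (s, a)]_(s' in setT) g a s'.

(* exp_reward t s = E_pi [ r(s_t, a_t) | s_0 = s ], computed by iterating the
   kernels: E[r(s_0,a_0)|s_0=s] = int r(s,a) pi(s)(da), and
   E[r(s_{t+1},a_{t+1})|s_0=s] = E_{a~pi(s),s'~P(s,a)} E[r(s_t,a_t)|s_0=s']. *)
Fixpoint exp_reward (t : nat) : S -> R :=
  match t with
  | 0 => fun s => \int[pi s]_(a in setT) r (s, a)
  | t'.+1 => step_exp (fun _ s' => exp_reward t' s')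
  end.

(* V_d^pi(s) = E_pi [ sum_t Phi_d(t) r(s_t,a_t) | s_0 = s ]
            = sum_t Phi_d(t) E_pi [ r(s_t,a_t) | s_0 = s ]
   (the series, taken as the limit of its partial sums). *)
Definition V (gam : nat -> R) (d : nat) (s : S) : R :=
  limn (series (fun t => Phi gam d t * exp_reward t s)).

End MDP.

(* Main.v *)
Require Import Defs.
From HB Require Import structures.
From mathcomp Require Import all_boot all_order all_algebra.
From mathcomp Require Import all_classical all_reals all_analysis.
From mathcomp Require Import lra measurable_realfun.
Import Order.TTheory GRing.Theory Num.Theory.
Import numFieldNormedType.Exports.
Local Open Scope classical_set_scope.
Local Open Scope ring_scope.

Section Comb.
Variables (R : realType) (gam : nat -> R).

Fixpoint Phi' (d t : nat) : R :=
  match d with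
  | 0 => gam 0 ^+ t
  | d'.+1 => \sum_(j < t.+1) Phi' d' j * gam d ^+ (t - j)
  end.

Definition G (N d : nat) : {poly R} :=
  \prod_(i < d.+1) \poly_(k < N) (gam i ^+ k).

Lemma coefG N d t : (t < N)%N -> (G N d)`_t = Phi' d t.
Proof.
elim: d t => [|d IH] t tN.
  by rewrite /G big_ord1 coef_poly tN.
rewrite /G big_ord_recr /= -/(G N d) coefM /=.
apply: eq_bigr => j _.
rewrite IH; last by apply: leq_ltn_trans tN; rewrite -ltnS.
by rewrite coef_poly (leq_ltn_trans (leq_subr _ _) tN).
Qed.

Lemma PhiE d t : Phi gam d t = Phi' d t.
Proof.
rewrite -(@coefG t.+1 d t (ltnSn t)) /G.
under eq_bigr do rewrite poly_def.
rewrite bigA_distr_bigA /= coef_sum /Phi.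
rewrite [LHS]big_mkcond /=.
idtac.
apply: eq_bigr => f _.
have -> : \prod_(i < d.+1) (gam i ^+ f i *: 'X^(f i))
   = (\prod_(i < d.+1) gam i ^+ f i)%:P * 'X^(\sum_(i < d.+1) (f i : nat)).
  rewrite -prodrXr rmorph_prod -big_split /=.
  by apply: eq_bigr => i _; rewrite mul_polyC.
rewrite coefCM coefXn eq_sym.
by case: eqP => _; rewrite ?mulr1 ?mulr0.
Qed.
End Comb.
Arguments Phi' {R}.
Section Comb2.
Variables (R : realType) (gam : nat -> R).
Local Notation Phi' := (Phi' gam).

Lemma Phi'0 d : Phi' d 0 = 1.
Proof. by elim: d => [|d IH] //=; rewrite big_ord1 IH mulr1. Qed.

Lemma Phi'S d t : Phi' d.+1 t.+1 = gam d.+1 * Phi' d.+1 t + Phi' d t.+1.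
Proof.
rewrite /= big_ord_recr /= subnn expr0 mulr1; congr (_ + _).
rewrite mulr_sumr; apply: eq_bigr => j _.
by rewrite subSn ?exprS 1?mulrCA // -ltnS.
Qed.

Lemma Phi'_rec D t : Phi' D t.+1 = \sum_(0 <= d < D.+1) gam d * Phi' d t.
Proof.
elim: D => [|D IH]; first by rewrite big_nat1 /= exprS.
by rewrite big_nat_recr // -IH Phi'S addrC.
Qed.

Lemma Phi'_ge0 d t : (forall i, (i <= d)%N -> 0 <= gam i) -> 0 <= Phi' d t.
Proof.
elim: d t => [|d IH] t hg /=; first by rewrite exprn_ge0 // hg.
apply: sumr_ge0 => j _; rewrite mulr_ge0 ?exprn_ge0 ?IH ?hg //.
by move=> i hi; rewrite hg // (leq_trans hi).
Qed.

Lemma geo_bound (u : nat -> R) g C : 0 <= g < 1 -> (forall t, 0 <= u t) -> 0 <= C ->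
  (forall N, \sum_(t < N.+1) u t <= C + g * \sum_(t < N) u t) ->
  forall N, \sum_(t < N) u t <= C / (1 - g).
Proof.
move=> /andP[g0 g1] u0 C0 hN [|N].
  by rewrite big_ord0 divr_ge0 // subr_ge0 ltW.
have h1 : \sum_(t < N) u t <= \sum_(t < N.+1) u t.
  by rewrite big_ord_recr /= lerDl.
rewrite ler_pdivlMr ?subr_gt0 //.
have := hN N; have := ler_wpM2l g0 h1; nra.
Qed.

Lemma Phi'_bound d : (forall i, (i <= d)%N -> 0 <= gam i < 1) ->
  exists C, forall N, \sum_(t < N) Phi' d t <= C.
Proof.
have ge0 d' : (forall i, (i <= d')%N -> 0 <= gam i < 1) -> forall t, 0 <= Phi' d' t.
  by move=> h t; apply: Phi'_ge0 => i /h /andP[].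
elim: d => [|d IH] hg.
  exists (1 / (1 - gam 0)); apply: geo_bound => //; first exact: hg.
  - by apply: ge0.
  - move=> N; rewrite big_ord_recl /= expr0 mulr_sumr.
    rewrite le_eqVlt; apply/orP; left; apply/eqP; congr (_ + _); apply: eq_bigr => i _.
    by rewrite exprS.
have [C hC] := IH (fun i hi => hg i (leq_trans hi (leqnSn _))).
have C0 : 0 <= C by have := hC 0%N; rewrite big_ord0.
exists (C / (1 - gam d.+1)); apply: geo_bound => //; first exact: hg.
  by apply: ge0.
move=> N; rewrite big_ord_recl Phi'0.
under eq_bigr => i _ do rewrite lift0 Phi'S.
have -> : \sum_(i < N) (gam d.+1 * Phi' d.+1 i + Phi' d i.+1) =
   gam d.+1 * \sum_(i < N) Phi' d.+1 i + \sum_(i < N) Phi' d i.+1.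
  by rewrite big_split mulr_sumr.
suff h : 1 + \sum_(i < N) Phi' d i.+1 <= C by lra.
apply: le_trans _ (hC N.+1); rewrite big_ord_recl Phi'0.
exact: lexx.
Qed.
End Comb2.
Section Meas.
Context {d} {T : measurableType d} {R : realType} {mu : {measure set T -> \bar R}}.
Hypothesis hmu : mu setT = 1%E.

Definition BM (f : T -> R) := measurable_fun setT f /\ exists M, forall x, `|f x| <= M.

Lemma BM_int (f : T -> R) : BM f -> mu.-integrable setT (EFin \o f).
Proof.
move=> [mf [M hM]]; apply: measurable_bounded_integrable => //.
  by rewrite hmu ltry.
exists M; split; first exact: num_real.
by move=> y hy x _; apply: le_trans (hM x) (ltW hy).
Qed.

Lemma Rint_cst (c : R) : \int[mu]_(x in setT) c = c.
Proof. by rewrite Rintegral_cst // hmu /= mulr1. Qed.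

Lemma Rint_bound (f : T -> R) (M : R) : measurable_fun setT f -> (forall x, `|f x| <= M) ->
  `|\int[mu]_(x in setT) f x| <= M.
Proof.
move=> mf hM.
have hf : BM f by split => //; exists M.
apply: le_trans (le_normr_Rintegral _ _) _ => //; first exact: BM_int.
rewrite -[X in _ <= X]Rint_cst; apply: le_Rintegral => //.
- apply: BM_int; split; first exact: measurableT_comp.
  by exists M => x; rewrite normr_id.
- by apply: BM_int; split => //; exists `|M| => x.
Qed.

Lemma BMD (f g : T -> R) : BM f -> BM g -> BM (fun x => f x + g x).
Proof.
move=> [mf [M hM]] [mg [N hN]]; split; first exact: measurable_realfun.measurable_funD.
by exists (M + N) => x; apply: le_trans (ler_normD _ _) (lerD (hM x) (hN x)).
Qed.

Lemma BMZ (c : R) (f : T -> R) : BM f -> BM (fun x => c * f x).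
Proof.
move=> [mf [M hM]]; split; first exact: measurable_realfun.measurable_funM.
by exists (`|c| * M) => x; rewrite normrM ler_wpM2l.
Qed.

Lemma BMC (c : R) : BM (fun _ => c).
Proof. by split => //; exists `|c|. Qed.

Lemma BM_sum (I : eqType) (s : seq I) (F : I -> T -> R) : {in s, forall i, BM (F i)} ->
  BM (fun x => \sum_(i <- s) F i x).
Proof.
elim: s => [|i s IH] hF.
  by under eq_fun do rewrite big_nil; exact: BMC.
under eq_fun do rewrite big_cons; apply: BMD.
  by apply: hF; rewrite mem_head.
by apply: IH => j js; apply: hF; rewrite in_cons js orbT.
Qed.

Lemma Rint_sum (I : eqType) (s : seq I) (F : I -> T -> R) : {in s, forall i, BM (F i)} ->
  \int[mu]_(x in setT) (\sum_(i <- s) F i x) = \sum_(i <- s) \int[mu]_(x in setT) F i x.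
Proof.
elim: s => [|i s IH] hF.
  by under eq_Rintegral do rewrite big_nil; rewrite big_nil Rint_cst.
have hs : {in s, forall j, BM (F j)}.
  by move=> j js; apply: hF; rewrite in_cons js orbT.
under eq_Rintegral do rewrite big_cons.
rewrite RintegralD //; first by rewrite IH // big_cons.
- by apply: BM_int; apply: hF; rewrite mem_head.
- exact/BM_int/BM_sum.
Qed.

Lemma Rint_dom (f_ : nat -> T -> R) (f : T -> R) (C : R) :
  (forall n, measurable_fun setT (f_ n)) -> (forall n x, `|f_ n x| <= C) ->
  (forall x, f_ ^~ x @ \oo --> f x) ->
  (fun n => \int[mu]_(x in setT) f_ n x) @ \oo --> \int[mu]_(x in setT) f x.
Proof.
move=> mf_ hC cf.
have mf : measurable_fun setT f by apply: (measurable_realfun.measurable_fun_cvg mf_) => x _; exact: cf.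
have bf : BM f.
  split => // ; exists C => x.
  have : `|f_ n x| @[n --> \oo] --> `|f x| by apply: cvg_norm; exact: cf.
  move/cvg_lim => <- //; apply: limr_le; first by apply/cvg_ex; eexists; apply: cvg_norm; exact: cf.
  by apply: nearW => n; exact: hC.
have mE n : measurable_fun setT (EFin \o f_ n) by apply/measurable_EFinP.
have mEf : measurable_fun setT (EFin \o f) by apply/measurable_EFinP.
have ig : mu.-integrable setT (cst C%:E : T -> \bar R).
  have -> : (cst C%:E : T -> \bar R) = EFin \o (fun _ => C) by [].
  exact/BM_int/BMC.
have h1 : \forall x \ae mu, setT x -> (EFin \o f_ n) x @[n --> \oo] --> (EFin \o f) x.
  by apply: aeW => x _; apply: cvg_comp (cf x) _; exact: cvg_id.
have h2 : \forall x \ae mu, forall n, setT x -> (`|(EFin \o f_ n) x| <= cst C%:E x)%E.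
  by apply: aeW => x n _ /=; rewrite lee_fin.
have [_ _ h] := dominated_convergence measurableT mE mEf h1 ig h2.
move: h; rewrite -(fineK (integrable_fin_num measurableT (@BM_int f bf))) => h.
exact: (fine_cvg h).
Qed.
End Meas.
Section Ker.
Context {d1 d2} {X : measurableType d1} {Y : measurableType d2} {R : realType}
  (k : R.-pker X ~> Y).

Lemma KM (f : X * Y -> R) (M : R) : measurable_fun setT f -> (forall z, `|f z| <= M) ->
  measurable_fun setT (fun x => \int[k x]_(y in setT) f (x, y)) /\
  forall x, `|\int[k x]_(y in setT) f (x, y)| <= M.
Proof.
move=> mf hM.
have hk x : k x setT = 1%E := prob_kernel x.
have mfx x : measurable_fun setT (fun y => f (x, y)) by exact: measurable_fun_pair2.
split; last first.
  move=> x; exact: (@Rint_bound _ _ _ (k x) (hk x) (fun y => f (x, y)) M (mfx x) (fun y => hM _)).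
pose g z := (f z + `|M|)%:E.
have g0 z : (0 <= g z)%E.
  move: (hM z); rewrite ler_norml => /andP[h _]; have := ler_norm M.
  rewrite /g lee_fin; lra.
have mg : measurable_fun setT g.
  by apply/measurable_EFinP; apply: measurable_funD => //.
have mI := measurable_fun_integral_finite_kernel g k g0 mg.
have -> : (fun x => \int[k x]_(y in setT) f (x, y)) =
    (fun x => fine (\int[k x]_y g (x, y))%E - `|M|).
  apply: funext => x.
  have -> : fine (\int[k x]_y g (x, y))%E = \int[k x]_(y in setT) (f (x, y) + `|M|) by [].
  rewrite RintegralD //.
  - by rewrite Rint_cst ?hk // addrK.
  - exact: (@BM_int _ _ _ (k x) (hk x) (fun y => f (x, y)) (conj (mfx x) (ex_intro _ M (fun y => hM _)))).
  - exact: (@BM_int _ _ _ (k x) (hk x) (fun=> `|M|) (BMC `|M|)).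
apply: measurable_funB => //.
exact: measurableT_comp mI.
Qed.
End Ker.
Lemma ser_bnd (R : realType) (p e : nat -> R) (C M : R) : (forall t, 0 <= p t) ->
  (forall N, \sum_(t < N) p t <= C) -> (forall t, `|e t| <= M) ->
  cvgn (series (fun t => p t * e t)) /\
  forall N, `|series (fun t => p t * e t) N| <= C * M.
Proof.
move=> p0 pC eM.
have M0 : 0 <= M by apply: le_trans (eM 0%N).
have bnd N : \sum_(0 <= t < N) `|p t * e t| <= C * M.
  apply: (@le_trans _ _ (\sum_(0 <= t < N) p t * M)).
    apply: ler_sum => t _; rewrite normrM ger0_norm //.
    exact: ler_wpM2l.
  by rewrite -mulr_suml big_mkord ler_wpM2r.
split; last first.
  move=> N; rewrite /series /=; apply: le_trans (ler_norm_sum _ _ _) (bnd N).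
apply: normed_cvg; apply: nondecreasing_is_cvgn.
  by apply: nondecreasing_series => n _ _; exact: normr_ge0.
by exists (C * M) => _ [n _ <-]; exact: bnd.
Qed.
Lemma cvg_sum_seq (R : realType) (I : eqType) (l : seq I) (u : I -> nat -> R) (a : I -> R) :
  {in l, forall i, u i n @[n --> \oo] --> a i} ->
  (\sum_(i <- l) u i n) @[n --> \oo] --> \sum_(i <- l) a i.
Proof.
elim: l => [|i l IH] hu.
  by under eq_fun do rewrite big_nil; rewrite big_nil; exact: cvg_cst.
under eq_fun do rewrite big_cons; rewrite big_cons.
apply: cvgD.
  by apply: hu; rewrite mem_head.
by apply: IH => j jl; apply: hu; rewrite in_cons jl orbT.
Qed.

Section Main.
Context (R : realType) (dS dA : measure_display)
  (S : measurableType dS) (A : measurableType dA)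
  (P : R.-pker (S * A)%type ~> S) (pi : R.-pker S ~> A)
  (r : S * A -> R).
Hypothesis r_meas : measurable_fun setT r.
Variable M : R.
Hypothesis hM : forall x, `|r x| <= M.

Local Notation E := (exp_reward P pi r).

Let hP z : P z setT = 1%E := prob_kernel z.
Let hpi z : pi z setT = 1%E := prob_kernel z.

Lemma stepM (g : S -> R) (s : S) : BM g -> BM (fun a => \int[P (s, a)]_(s' in setT) g s').
Proof.
move=> [mg [C hC]].
have [m b] := KM P (fun z => g z.2) C (measurableT_comp mg measurable_snd) (fun z => hC _).
split; last by exists C => a; exact: b.
exact: (measurableT_comp m (pair1_measurable s)).
Qed.

Lemma E_BM t : measurable_fun setT (E t) /\ forall s, `|E t s| <= M.
Proof.
elim: t => [|t [mE bE]].
  exact: (KM pi r M r_meas hM).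
have [mh bh] := KM P (fun z => E t z.2) M (measurableT_comp mE measurable_snd) (fun z => bE _).
exact: (KM pi (fun z => \int[P z]_(s' in setT) E t s') M mh bh).
Qed.

Lemma step_sum (I : eqType) (l : seq I) (c : I -> R) (g : I -> S -> R) s :
  {in l, forall i, BM (g i)} ->
  step_exp P pi (fun _ s' => \sum_(i <- l) c i * g i s') s =
  \sum_(i <- l) c i * step_exp P pi (fun _ s' => g i s') s.
Proof.
move=> hg; rewrite /step_exp.
transitivity (\int[pi s]_(a in setT) \sum_(i <- l) c i * \int[P (s, a)]_(s' in setT) g i s').
  apply: eq_Rintegral => a _.
  rewrite (Rint_sum (hP (s, a))); last by move=> i il; apply: BMZ; apply: hg.
  apply: eq_big_seq => i il; rewrite RintegralZl //.
  exact: (@BM_int _ _ _ (P (s, a)) (hP (s, a)) (g i) (hg i il)).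
rewrite (Rint_sum (hpi s)); last by move=> i il; apply: BMZ; apply: stepM; apply: hg.
apply: eq_big_seq => i il; rewrite RintegralZl //.
exact: (@BM_int _ _ _ (pi s) (hpi s) _ (stepM _ s (hg i il))).
Qed.

Lemma step_add (W : S -> R) s : BM W ->
  step_exp P pi (fun a s' => r (s, a) + W s') s =
  \int[pi s]_(a in setT) r (s, a) + step_exp P pi (fun _ s' => W s') s.
Proof.
move=> hW; rewrite /step_exp.
transitivity (\int[pi s]_(a in setT) (r (s, a) + \int[P (s, a)]_(s' in setT) W s')).
  apply: eq_Rintegral => a _; rewrite RintegralD //.
  - by rewrite Rint_cst.
  - exact: (@BM_int _ _ _ (P (s, a)) (hP (s, a)) _ (BMC _)).
  - exact: (@BM_int _ _ _ (P (s, a)) (hP (s, a)) _ hW).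
rewrite RintegralD //.
- apply: (@BM_int _ _ _ (pi s) (hpi s)); split; first exact: measurable_fun_pair2.
  by exists M => a; exact: hM.
- exact: (@BM_int _ _ _ (pi s) (hpi s) _ (stepM _ s hW)).
Qed.

Lemma step_lim (g_ : nat -> S -> R) (g : S -> R) (C : R) s :
  (forall n, measurable_fun setT (g_ n)) -> (forall n x, `|g_ n x| <= C) ->
  (forall x, g_ ^~ x @ \oo --> g x) ->
  (fun n => step_exp P pi (fun _ s' => g_ n s') s) @ \oo -->
     step_exp P pi (fun _ s' => g s') s.
Proof.
move=> mg hC cg; rewrite /step_exp.
apply: (@Rint_dom _ _ _ (pi s) (hpi s) _ _ C).
- by move=> n; exact: (stepM _ s (conj (mg n) (ex_intro _ C (hC n)))).1.
- by move=> n a; exact: (@Rint_bound _ _ _ (P (s, a)) (hP (s, a)) _ _ (mg n) (hC n)).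
- by move=> a; exact: (@Rint_dom _ _ _ (P (s, a)) (hP (s, a)) _ _ _ mg hC cg).
Qed.
End Main.
Arguments E_BM {R dS dA S A P pi r} r_meas {M} hM t.
Arguments step_sum {R dS dA S A P pi I} l c g s _.
Arguments step_add {R dS dA S A P pi r} r_meas {M} hM W s _.
Arguments stepM {R dS dA S A P} g s _.
Arguments Phi'_bound {R gam d} _.
Arguments ser_bnd {R p e C M} _ _ _.
Arguments PhiE {R} gam d t.
Theorem proposition3 (R : realType) (dS dA : measure_display)
  (S : measurableType dS) (A : measurableType dA)
  (P : R.-pker (S * A)%type ~> S) (pi : R.-pker S ~> A)
  (r : S * A -> R) (D : nat) (gam : nat -> R)
  (r_meas : measurable_fun setT r)
  (r_bnd : exists M : R, forall x, `|r x| <= M)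
  (gam01 : forall d, (d <= D)%N -> 0 < gam d < 1) :
  forall s : S,
    V P pi r gam D s =
    step_exp P pi
      (fun a s' => r (s, a) + \sum_(0 <= d < D.+1) gam d * V P pi r gam d s') s.
Proof.
move=> s.
have [M hM] := r_bnd.
pose E := exp_reward P pi r.
have EB t : BM (E t).
  have [m b] := E_BM (P:=P) (pi:=pi) r_meas hM t.
  by split => //; exists M.
pose F d N s' := series (fun t => Phi gam d t * E t s') N.
have HV d : (d <= D)%N -> exists C,
   [/\ forall N, measurable_fun setT (F d N), forall N s', `|F d N s'| <= C,
       forall s', F d ^~ s' @ \oo --> V P pi r gam d s' & BM (V P pi r gam d)].
  move=> dD.
  have hg i : (i <= d)%N -> 0 <= gam i < 1.
    by move=> id; have /andP[g0 g1] := gam01 i (leq_trans id dD); rewrite ltW.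
  have [C hC] := @Phi'_bound R gam d hg.
  have ph0 t : 0 <= Phi gam d t.
    by rewrite PhiE; apply: Phi'_ge0 => i /hg /andP[].
  have hC' N : \sum_(t < N) Phi gam d t <= C.
    by under eq_bigr do rewrite PhiE; exact: hC.
  have sb s' := ser_bnd (e := fun t => E t s') ph0 hC' (fun t => (E_BM (P:=P) (pi:=pi) r_meas hM t).2 s').
  have cF s' : F d ^~ s' @ \oo --> V P pi r gam d s' by exact: (sb s').1.
  have mF N : measurable_fun setT (F d N).
    have := @BM_sum _ _ _ _ (index_iota 0 N) (fun t s' => Phi gam d t * E t s') (fun t _ => BMZ _ _ (EB t)).
    by case.
  exists (C * M); split => //.
  - by move=> N s'; exact: (sb s').2.
  split; first exact: (measurable_fun_cvg mF (fun x _ => cF x)).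
  exists (C * M) => s'.
  have : `|F d N s'| @[N --> \oo] --> `|V P pi r gam d s'| by apply: cvg_norm; exact: cF.
  move/cvg_lim => <- //; apply: limr_le.
    by apply/cvg_ex; eexists; apply: cvg_norm; exact: cF.
  by apply: nearW => N; exact: (sb s').2.
have BV d : (d <= D)%N -> BM (V P pi r gam d).
  by move=> dD; have [C [_ _ _ h]] := HV d dD.
have eqF N : F D N.+1 s = E 0%N s +
    \sum_(0 <= d < D.+1) gam d * step_exp P pi (fun _ s' => F d N s') s.
  rewrite /F /series /= big_nat_recl // PhiE Phi'0 mul1r; congr (_ + _).
  under eq_bigr do rewrite PhiE Phi'_rec mulr_suml.
  rewrite exchange_big /=; apply: eq_big_seq => d dD.
  rewrite (step_sum (index_iota 0 N) (fun t => Phi gam d t) (fun t => E t));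
    last by move=> t _; exact: EB.
  rewrite mulr_sumr; apply: eq_bigr => t _.
  by rewrite PhiE mulrA.
have key : (fun N => F D N.+1 s) @ \oo -->
    E 0%N s + \sum_(0 <= d < D.+1) gam d * step_exp P pi (fun _ s' => V P pi r gam d s') s.
  under eq_fun do rewrite eqF.
  apply: cvgD; first exact: cvg_cst.
  apply: cvg_sum_seq => d; rewrite mem_index_iota ltnS => dD.
  apply: cvgMl_tmp.
  have [C [mF bF cF _]] := HV d dD.
  exact: (@step_lim R dS dA S A P pi (F d) (V P pi r gam d) C s mF bF cF).
have key' : F D ^~ s @ \oo -->
    E 0%N s + \sum_(0 <= d < D.+1) gam d * step_exp P pi (fun _ s' => V P pi r gam d s') s.
  by rewrite -cvg_shiftS.
rewrite /V (cvg_lim (@Rhausdorff R) key').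
rewrite (step_add r_meas hM); last first.
  apply: BM_sum => d; rewrite mem_index_iota ltnS => dD.
  exact/BMZ/BV.
rewrite (step_sum (index_iota 0 D.+1) gam (fun d => V P pi r gam d)) //.
by move=> d; rewrite mem_index_iota ltnS => dD; exact: BV.
Qed.
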